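(* For every suboptimal line $(ij)\in O^c(\theta)$, the set $\Delta(\theta,ij)$ is nonempty.
   Context: Customer types $\mathcal I=\{1,\dots,I\}$, servers $\mathcal J=\{1,\dots,J\}$, lines $\mathcal L\subseteq\mathcal I\times\mathcal J$, $\mathcal S_i=\{j:(ij)\in\mathcal L\}$, $\mathcal C_j=\{i:(ij)\in\mathcal L\}$, rates $\lambda\in\mathbb R^I_{>0}$, $\mu\in\mathbb R^J_{>0}$, payoff vector $\theta\in\mathbb R^{\mathcal L}_{\ge0}$. $\mathrm{LP}(\theta,\varepsilon)$: maximize $\sum\theta_{ij}x_{ij}$ s.t. $\sum_{j\in\mathcal S_i}x_{ij}=\lambda_i$ ($i\in\mathcal I$), $\sum_{i\in\mathcal C_j}x_{ij}\le\mu_j-\varepsilon$ ($j\in\mathcal J$), $x\ge0$; dual $\mathrm D(\theta,\varepsilon)$: minimize $\sum_i\lambda_iv_i+\sum_j(\mu_j-\varepsilon)w_j$ s.t. $v_i+w_j\ge\theta_{ij}$ on $\mathcal L$, $w\ge0$. Standing assumptions: $\varepsilon>0$ is a fixed slack for which $\mathrm{LP}(\cdot,\varepsilon)$ is feasible, and for every payoff vector considered all basic feasible solutions of $\mathrm{LP}$ and of its dual are nondegenerate, so optimal primal and dual solutions are unique (with $x^\theta$ the optimal primal solution). $O(\theta)=\{(ij)\in\mathcal L:x^\theta_{ij}>0\}$, $O^c(\theta)=\mathcal L\setminus O(\theta)$. For $a\ge0$, $A(\theta,ij,a)\in\mathbb R^{\mathcal L}_{\ge0}$ equals $\theta$ except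 that its $(ij)$ entry is $a$; $\Delta(\theta,ij)=\{a\ge0:(ij)\in O(A(\theta,ij,a))\}$. *)

(* Defs.v *)
From mathcomp Require Import all_boot all_order all_algebra.
Set Implicit Arguments. Unset Strict Implicit. Unset Printing Implicit Defensive.
Import Order.TTheory GRing.Theory Num.Theory.
Local Open Scope ring_scope.

(* A vector in R^L is represented as a function
   on Cust * Serv; primal vectors are required to vanish off L, and only the
   values of payoff vectors on L are ever used. *)
Section LP.
Variables (R : realFieldType) (Cust Serv : finType) (L : {set Cust * Serv}).
Variables (lam : Cust -> R) (mu : Serv -> R) (eps : R).

Definition assigned (x : Cust * Serv -> R) (i : Cust) : R :=
  \sum_(j : Serv | (i, j) \in L) x (i, j).
Definition load (x : Cust * Serv -> R) (j : Serv) : R :=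
  \sum_(i : Cust | (i, j) \in L) x (i, j).
Definition slack (x : Cust * Serv -> R) (j : Serv) : R :=
  mu j - eps - load x j.

Definition primal_feasible (x : Cust * Serv -> R) : Prop :=
  [/\ (forall l, l \notin L -> x l = 0),
      (forall l, l \in L -> 0 <= x l),
      (forall i, assigned x i = lam i) &
      (forall j, load x j <= mu j - eps)].

Definition objective (theta x : Cust * Serv -> R) : R :=
  \sum_(l in L) theta l * x l.

Definition primal_optimal (theta x : Cust * Serv -> R) : Prop :=
  primal_feasible x /\
  forall y, primal_feasible y -> objective theta y <= objective theta x.

(* basic feasible solution of the standard form (variables x_l, l in L, and
   slacks s_j): the columns of the positive variables are linearly
   independent. *)
Definition primal_basic (x : Cust * Serv -> R) : Prop :=
  primal_feasible x /\
  forall (c : Cust * Serv -> R) (d : Serv -> R),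
    (forall l, c l != 0 -> (l \in L) && (0 < x l)) ->
    (forall j, d j != 0 -> 0 < slack x j) ->
    (forall i, assigned c i = 0) ->
    (forall j, load c j + d j = 0) ->
    (forall l, c l = 0) /\ (forall j, d j = 0).

Definition primal_nondegenerate (x : Cust * Serv -> R) : Prop :=
  addn #|[set l in L | 0 < x l]| #|[set j | 0 < slack x j]| =
   addn #|Cust| #|Serv|.

Definition primal_bfs_nondegenerate : Prop :=
  forall x, primal_basic x -> primal_nondegenerate x.

Definition dual_feasible (theta : Cust * Serv -> R) (v : Cust -> R)
    (w : Serv -> R) : Prop :=
  (forall l, l \in L -> theta l <= v l.1 + w l.2) /\ (forall j, 0 <= w j).

(* basic feasible solution of the dual: the active constraints determine
   (v, w) uniquely, i.e. their gradients span R^(I+J) *)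
Definition dual_basic (theta : Cust * Serv -> R) (v : Cust -> R)
    (w : Serv -> R) : Prop :=
  dual_feasible theta v w /\
  forall (dv : Cust -> R) (dw : Serv -> R),
    (forall l, l \in L -> v l.1 + w l.2 = theta l -> dv l.1 + dw l.2 = 0) ->
    (forall j, w j = 0 -> dw j = 0) ->
    (forall i, dv i = 0) /\ (forall j, dw j = 0).

Definition dual_nondegenerate (theta : Cust * Serv -> R) (v : Cust -> R)
    (w : Serv -> R) : Prop :=
  addn #|[set l in L | v l.1 + w l.2 == theta l]| #|[set j | w j == 0]| =
   addn #|Cust| #|Serv|.

Definition dual_bfs_nondegenerate (theta : Cust * Serv -> R) : Prop :=
  forall v w, dual_basic theta v w -> dual_nondegenerate theta v w.

Definition A_upd (theta : Cust * Serv -> R) (l : Cust * Serv) (a : R) :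
    Cust * Serv -> R :=
  fun l' => if l' == l then a else theta l'.

(* (ij) \in O(theta): LP(theta) has an optimal solution and the (unique, under
   nondegeneracy) optimal solution puts positive mass on (ij).  Stated robustly:
   every optimal solution has x_ij > 0. *)
Definition in_O (theta : Cust * Serv -> R) (l : Cust * Serv) : Prop :=
  l \in L /\ (exists x, primal_optimal theta x) /\
  (forall x, primal_optimal theta x -> 0 < x l).

Definition Delta (theta : Cust * Serv -> R) (l : Cust * Serv) (a : R) : Prop :=
  0 <= a /\ in_O (A_upd theta l a) l.

End LP.

(* Main.v *)
Require Import Defs.
From mathcomp Require Import all_boot all_order all_algebra.
From mathcomp Require Import ring lra.
From Stdlib Require Import Classical.
Set Implicit Arguments. Unset Strict Implicit. Unset Printing Implicit Defensive.
Import Order.TTheory GRing.Theory Num.Theory.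
Local Open Scope ring_scope.

Section Aux.
Variable R : realFieldType.

Lemma argmin (T : finType) (P : pred T) (f : T -> R) v1 :
  P v1 -> exists v0, P v0 /\ forall v, P v -> f v0 <= f v.
Proof.
move=> Pv1; case: (arg_minP f Pv1) => v0 Pv0 H; exists v0; split=> //.
Qed.

Lemma minpos (T : finType) (P : pred T) (f : T -> R) :
  (forall v, P v -> 0 < f v) -> exists2 t, 0 < t & forall v, P v -> t <= f v.
Proof.
move=> H; case: (pickP P) => [v1 Pv1|P0].
  have [v0 [Pv0 Hv0]] := argmin f Pv1; exists (f v0); first exact: H.
  exact: Hv0.
by exists 1 => // v; rewrite P0.
Qed.
End Aux.

Section Dep.
Variables (R : realFieldType) (Cust Serv : finType).
Definition colv1 (l : Cust * Serv) (k : Cust + Serv) : R :=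
  match k with inl i => (l.1 == i)%:R | inr j => (l.2 == j)%:R end.
Definition colv2 (j0 : Serv) (k : Cust + Serv) : R :=
  match k with inl _ => 0 | inr j => (j0 == j)%:R end.

Lemma dep (P1 : {set Cust * Serv}) (P2 : {set Serv}) :
  (#|Cust| + #|Serv| < #|P1| + #|P2|)%N ->
  exists (c : Cust * Serv -> R) (d : Serv -> R),
   [/\ forall l, l \notin P1 -> c l = 0, forall j, j \notin P2 -> d j = 0,
      (exists l, c l != 0) \/ (exists j, d j != 0),
      forall i, \sum_j c (i, j) = 0 & forall j, \sum_i c (i, j) + d j = 0].
Proof.
move=> Hcard.
pose K : finType := (Cust + Serv)%type.
pose A : 'M[R]_(#|P1| + #|P2|, #|K|) := \matrix_(a, b)
  match split a with inl a1 => colv1 (enum_val a1) (enum_val b)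
                   | inr a2 => colv2 (enum_val a2) (enum_val b) end.
have sl : forall a1, split (lshift #|P2| a1) = inl a1 := fun a1 => unsplitK (inl _ a1).
have sr : forall a2, split (rshift #|P1| a2) = inr a2 := fun a2 => unsplitK (inr _ a2).
have AE1 : forall a1 k, A (lshift _ a1) (enum_rank k) = colv1 (enum_val a1) k.
  move=> a1 k; by rewrite mxE sl enum_rankK.
have AE2 : forall a2 k, A (rshift _ a2) (enum_rank k) = colv2 (enum_val a2) k.
  by move=> a2 k; rewrite mxE sr enum_rankK.
have nfree : ~~ row_free A.
  rewrite /row_free; apply/negP => /eqP HA.
  have := rank_leq_col A; rewrite HA card_sum => H.
  by move: (leq_ltn_trans H Hcard); rewrite ltnn.
have [i [j Hij]] : exists i j, kermx A i j != 0.
  apply: not_all_not_ex => H0; move: nfree; rewrite -kermx_eq0 => /negP; apply.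
  apply/eqP; apply/matrixP => i j.
  have [->|Hne] := eqVneq (kermx A i j) 0; first by rewrite mxE.
  by exfalso; apply: (H0 i); exists j.
pose u := row i (kermx A).
have Hu : u *m A = 0 by rewrite /u -row_mul mulmx_ker row0.
pose c l := \sum_(a1 < #|P1| | enum_val a1 == l) u 0 (lshift #|P2| a1).
pose d j := \sum_(a2 < #|P2| | enum_val a2 == j) u 0 (rshift #|P1| a2).
have cE : forall a1, c (enum_val a1) = u 0 (lshift _ a1).
  by move=> a1; rewrite /c (big_pred1 a1) // => a; rewrite /= (inj_eq enum_val_inj).
have dE : forall a2, d (enum_val a2) = u 0 (rshift _ a2).
  by move=> a2; rewrite /d (big_pred1 a2) // => a; rewrite /= (inj_eq enum_val_inj).
have c0 : forall l, l \notin P1 -> c l = 0.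
  move=> l Hl; rewrite /c big1 // => a /eqP Ha; move: (enum_valP a).
  by rewrite Ha (negbTE Hl).
have d0 : forall j, j \notin P2 -> d j = 0.
  move=> j0 Hl; rewrite /d big1 // => a /eqP Ha; move: (enum_valP a).
  by rewrite Ha (negbTE Hl).
have S1 : forall F : Cust * Serv -> R,
    \sum_(a1 < #|P1|) u 0 (lshift _ a1) * F (enum_val a1) = \sum_l c l * F l.
  move=> F; rewrite (eq_bigr (fun a1 => c (enum_val a1) * F (enum_val a1))) => [|a1 _]; last by rewrite cE.
  rewrite -(big_enum_val (fun l => c l * F l)) /= big_mkcond /=.
  by apply: eq_bigr => l _; case: ifP => // /negbT Hl; rewrite c0 // mul0r.
have S2 : forall F : Serv -> R,
    \sum_(a2 < #|P2|) u 0 (rshift _ a2) * F (enum_val a2) = \sum_j d j * F j.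
  move=> F; rewrite (eq_bigr (fun a2 => d (enum_val a2) * F (enum_val a2))) => [|a2 _]; last by rewrite dE.
  rewrite -(big_enum_val (fun l => d l * F l)) /= big_mkcond /=.
  by apply: eq_bigr => l _; case: ifP => // /negbT Hl; rewrite d0 // mul0r.
have Key : forall k : K, \sum_l c l * colv1 l k + \sum_j d j * colv2 j k = 0.
  move=> k; rewrite -S1 -S2.
  have := congr1 (fun M : 'M[R]_(1, #|K|) => M 0 (enum_rank k)) Hu; rewrite /= !mxE big_split_ord /=.
  move=> H; rewrite -[RHS]H; congr (_ + _); apply: eq_bigr => a _;
    by rewrite ?AE1 ?AE2.
have Epair : forall G : Cust * Serv -> R, \sum_l G l = \sum_i \sum_j G (i, j).
  by move=> G; rewrite pair_bigA; apply: eq_bigr => [[]].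
exists c, d; split => //.
- have : u 0 j != 0 by rewrite mxE.
  rewrite -(splitK j); case: (split j) => a /= Ha.
    by left; exists (enum_val a); rewrite cE.
  by right; exists (enum_val a); rewrite dE.
- move=> i0; have := Key (inl i0); rewrite [X in _ + X]big1 ?addr0 => [|j0 _]; last by rewrite /= mulr0.
  rewrite Epair (bigD1 i0) //= [X in _ + X]big1 ?addr0 => [|i1 Hi]; last first.
    by apply: big1 => j0 _; rewrite (negbTE Hi) mulr0.
  by under eq_bigr => j0 _ do rewrite eqxx mulr1.
- move=> j0; have := Key (inr j0); rewrite Epair [X in _ + X](bigD1 j0) //= eqxx mulr1.
  rewrite [X in _ + (_ + X)]big1 ?addr0 => [|j1 Hj]; last by rewrite (negbTE Hj) mulr0.
  move=> H; rewrite -[RHS]H; congr (_ + _); apply: eq_bigr => i0 _.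
  rewrite (bigD1 j0) //= eqxx mulr1 big1 ?addr0 // => j1 Hj.
  by rewrite (negbTE Hj) mulr0.
Qed.
End Dep.

Section LPthy.
Variables (R : realFieldType) (Cust Serv : finType) (L : {set Cust * Serv}).
Variables (lam : Cust -> R) (mu : Serv -> R) (eps : R).

Notation feas := (primal_feasible L lam mu eps).
Notation basic := (primal_basic L lam mu eps).
Notation slk := (slack L mu eps).
Notation obj := (objective L).

Definition supp1 (x : Cust * Serv -> R) := [set l in L | 0 < x l].
Definition supp2 (x : Cust * Serv -> R) := [set j | 0 < slk x j].
Definition val (x : Cust * Serv -> R) (v : (Cust * Serv + Serv)%type) :=
  match v with inl l => x l | inr j => slk x j end.
Definition dir (c : Cust * Serv -> R) (d : Serv -> R) (v : (Cust * Serv + Serv)%type) :=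
  match v with inl l => c l | inr j => d j end.

Lemma feas_val x : feas x -> forall v, 0 <= val x v.
Proof.
case=> H0 H1 _ H3 [l|j] /=.
  by case: (boolP (l \in L)) => Hl; [exact: H1 | rewrite H0].
by rewrite /slack subr_ge0.
Qed.

Lemma assigned_lin y c (t : R) i :
  assigned L (fun l => y l + t * c l) i = assigned L y i + t * assigned L c i.
Proof. by rewrite /assigned big_split /= -mulr_sumr. Qed.

Lemma load_lin y c (t : R) j :
  load L (fun l => y l + t * c l) j = load L y j + t * load L c j.
Proof. by rewrite /load big_split /= -mulr_sumr. Qed.

Lemma obj_lin theta y c (t : R) :
  obj theta (fun l => y l + t * c l) = obj theta y + t * obj theta c.
Proof.
rewrite /objective mulr_sumr -big_split /=; apply: eq_bigr => l _; ring.
Qed.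

Lemma assigned_scale c (s : R) i :
  assigned L (fun l => s * c l) i = s * assigned L c i.
Proof. by rewrite /assigned mulr_sumr. Qed.
Lemma load_scale c (s : R) j :
  load L (fun l => s * c l) j = s * load L c j.
Proof. by rewrite /load mulr_sumr. Qed.
Lemma obj_scale theta c (s : R) :
  obj theta (fun l => s * c l) = s * obj theta c.
Proof. rewrite /objective mulr_sumr; apply: eq_bigr => l _; ring. Qed.

Lemma move_feas y c d (t : R) :
  feas y -> (forall l, l \notin L -> c l = 0) ->
  (forall i, assigned L c i = 0) -> (forall j, load L c j + d j = 0) ->
  (forall v, 0 <= val y v + t * dir c d v) ->
  feas (fun l => y l + t * c l) /\
  forall v, val (fun l => y l + t * c l) v = val y v + t * dir c d v.
Proof.
move=> Fy cL Hc Hd Hv.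
have Ev : forall v, val (fun l => y l + t * c l) v = val y v + t * dir c d v.
  case=> [l|j] //=; rewrite /slack load_lin.
  have := Hd j; move=> Hj; have -> : d j = - load L c j by lra.
  ring.
split=> //; case: Fy => H0 H1 H2 H3; split.
- by move=> l Hl; rewrite H0 // cL // mulr0 addr0.
- by move=> l _; have := Hv (inl l); rewrite /=.
- by move=> i; rewrite assigned_lin H2 Hc mulr0 addr0.
- move=> j; have := Hv (inr j); rewrite -(Ev (inr j)) /= /slack; lra.
Qed.

Lemma nonneg_move y c d (t : R) :
  (forall v, 0 <= val y v) -> 0 <= t ->
  (forall v, dir c d v < 0 -> t <= val y v / - dir c d v) ->
  forall v, 0 <= val y v + t * dir c d v.
Proof.
move=> H0 Ht Hm v; case: (ltrP (dir c d v) 0) => Hd.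
  have := Hm v Hd; rewrite ler_pdivlMr ?oppr_gt0 //; lra.
by have := H0 v; have := mulr_ge0 Ht Hd; lra.
Qed.


Lemma supp_card_lt y z (v0 : (Cust * Serv + Serv)%type) :
  (forall l, l \in supp1 z -> l \in supp1 y) ->
  (forall j, j \in supp2 z -> j \in supp2 y) ->
  match v0 with inl l => (l \in supp1 y) && (l \notin supp1 z)
              | inr j => (j \in supp2 y) && (j \notin supp2 z) end ->
  (#|supp1 z| + #|supp2 z| < #|supp1 y| + #|supp2 y|)%N.
Proof.
move=> S1 S2; have L1 : (#|supp1 z| <= #|supp1 y|)%N by apply/subset_leq_card/subsetP.
have L2 : (#|supp2 z| <= #|supp2 y|)%N by apply/subset_leq_card/subsetP.
case: v0 => [l|j] /andP[Hy Hz].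
  have : supp1 z \proper supp1 y by apply/properP; split; [exact/subsetP | exists l].
  move/proper_card => H; rewrite -addSn; exact: leq_add.
have : supp2 z \proper supp2 y by apply/properP; split; [exact/subsetP | exists j].
move/proper_card => H; rewrite -addnS; exact: leq_add.
Qed.

Lemma step theta y c d :
  feas y -> (forall l, c l != 0 -> (l \in L) && (0 < y l)) ->
  (forall j, d j != 0 -> 0 < slk y j) ->
  (forall i, assigned L c i = 0) -> (forall j, load L c j + d j = 0) ->
  (exists v, dir c d v != 0) -> 0 <= obj theta c ->
  exists z, [/\ feas z, obj theta y <= obj theta z &
     (#|supp1 z| + #|supp2 z| < #|supp1 y| + #|supp2 y|)%N].
Proof.
move=> Fy H1 H2 H3 H4 [vn Hvn] Hobj.
have Hdp : forall v, dir c d v != 0 -> 0 < val y v.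
  by case=> [l|j] /= Hv; [case/andP: (H1 l Hv) | exact: H2].
have cL : forall l, l \notin L -> c l = 0.
  move=> l Hl; case: (eqVneq (c l) 0) => // /H1 /andP[Hl' _].
  by rewrite Hl' in Hl.
have [v1 Hv1] : exists v, dir c d v < 0.
  apply: NNPP => Hn.
  have Hge : forall v, 0 <= dir c d v.
    move=> v; rewrite leNgt; apply/negP => Hlt; apply: Hn; by exists v.
  have c0 : forall l, c l = 0.
    case=> i j; case: (boolP ((i, j) \in L)) => Hl; last exact: cL.
    have := @psumr_eq0P _ _ (fun j' => (i, j') \in L) (fun j' => c (i, j')).
    move=> /(_ (fun j' _ => Hge (inl (i, j')))) /(_ (H3 i)); exact.
  have d0 : forall j, d j = 0.
    move=> j; have := H4 j; rewrite /load big1 ?add0r // => l _; exact: c0.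
  by move: Hvn; case: vn => [l|j] /=; rewrite ?c0 ?d0 eqxx.
have [v0 [Hv0 Hmin]] := @argmin _ _ (fun v => dir c d v < 0) (fun v => val y v / - dir c d v) v1 Hv1.
set t := val y v0 / - dir c d v0.
have Hpos0 : 0 < val y v0 by apply: Hdp; rewrite lt_eqF.
have Ht : 0 <= t by rewrite /t divr_ge0 // ?ltW // oppr_gt0.
have Hnn := nonneg_move (feas_val Fy) Ht Hmin.
have [Fz Ez] := move_feas Fy cL H3 H4 Hnn.
exists (fun l => y l + t * c l); split => //.
  by rewrite obj_lin; have := mulr_ge0 Ht Hobj; lra.
have Hsub : forall v, 0 < val (fun l => y l + t * c l) v -> 0 < val y v.
  move=> v; rewrite Ez; case: (eqVneq (dir c d v) 0) => [->|/Hdp //].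
  by rewrite mulr0 addr0.
have Hz0 : val (fun l => y l + t * c l) v0 = 0.
  by rewrite Ez /t; field; rewrite lt_eqF.
apply: (supp_card_lt (v0 := v0)).
- move=> l; rewrite !inE => /andP[-> Hl] /=; exact: (Hsub (inl l)).
- move=> j; rewrite !inE => Hj; exact: (Hsub (inr j)).
- clearbody t; case: v0 Hv0 Hpos0 Hz0 {Hmin} => [l|j] /= Hv0 Hp Hz; rewrite !inE ?Hp /=.
    have /andP[-> _] : (l \in L) && (0 < y l) by apply: H1; rewrite lt_eqF.
    by rewrite Hz ltxx.
  by rewrite -/(slk _ j) Hz ltxx.
Qed.


Lemma nonbasic_step theta y : feas y -> ~ basic y ->
  exists z, [/\ feas z, obj theta y <= obj theta z &
     (#|supp1 z| + #|supp2 z| < #|supp1 y| + #|supp2 y|)%N].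
Proof.
move=> Fy Nb.
have [c [d [H1 H2 H3 H4 Hn]]] : exists (c : Cust * Serv -> R) (d : Serv -> R),
   [/\ (forall l, c l != 0 -> (l \in L) && (0 < y l)),
       (forall j, d j != 0 -> 0 < slk y j),
       (forall i, assigned L c i = 0),
       (forall j, load L c j + d j = 0) &
       ~ ((forall l, c l = 0) /\ (forall j, d j = 0))].
  apply: NNPP => Hn; apply: Nb; split => // c d A1 A2 A3 A4.
  apply: NNPP => Hn2; apply: Hn; by exists c, d; split.
have Hv : exists v, dir c d v != 0.
  apply: NNPP => Hv; apply: Hn; split.
    move=> l; case: (eqVneq (c l) 0) => // ne; exfalso; apply: Hv; by exists (inl l).
  move=> j; case: (eqVneq (d j) 0) => // ne; exfalso; apply: Hv; by exists (inr j).
have [s [Hs0 Hs]] : exists s : R, s != 0 /\ 0 <= s * obj theta c.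
  case: (lerP 0 (obj theta c)) => H.
    by exists 1; rewrite oner_eq0 mul1r.
  by exists (-1); split; [rewrite oppr_eq0 oner_eq0 | rewrite mulN1r; lra].
apply: (@step theta y (fun l => s * c l) (fun j => s * d j)) => //.
- by move=> l; rewrite mulf_eq0 negb_or => /andP[_ /H1].
- by move=> j; rewrite mulf_eq0 negb_or => /andP[_ /H2].
- by move=> i; rewrite assigned_scale H3 mulr0.
- by move=> j; rewrite load_scale -mulrDr H4 mulr0.
- by case: Hv => -[l|j] /= Hv; [exists (inl l) | exists (inr j)]; rewrite /= mulf_neq0.
- by rewrite obj_scale.
Qed.

Lemma reduce theta : forall n y, feas y ->
  (#|supp1 y| + #|supp2 y| <= n)%N ->
  exists z, basic z /\ obj theta y <= obj theta z.
Proof.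
elim=> [|n IH] y Fy Hc; (case: (classic (basic y)) => Hb; first by exists y).
  by have [z [_ _ Hlt]] := nonbasic_step theta Fy Hb; move: (leq_trans Hlt Hc); rewrite ltn0.
have [z [Fz Hyz Hlt]] := nonbasic_step theta Fy Hb.
have [w [Bw Hzw]] := IH z Fz (leq_trans Hlt Hc).
by exists w; split => //; apply: le_trans Hzw.
Qed.

Lemma basic_uniq x x' : basic x -> feas x' ->
  supp1 x = supp1 x' -> supp2 x = supp2 x' -> forall l, x l = x' l.
Proof.
move=> [Fx Bx] Fx' E1 E2.
have Vx := feas_val Fx; have Vx' := feas_val Fx'.
pose c := fun l => x l + (-1) * x' l.
pose d := fun j => slk x j - slk x' j.
case: Fx => X0 X1 X2 X3; case: Fx' => Y0 Y1 Y2 Y3.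
have [Hc _] : (forall l, c l = 0) /\ (forall j, d j = 0); first apply: Bx.
- move=> l; rewrite /c; case: (boolP (l \in L)) => Hl; last by rewrite X0 ?Y0 // mulr0 addr0 eqxx.
  move=> Hne; have := Vx (inl l); have := Vx' (inl l); rewrite /= => h1 h2.
  case: (ltrP 0 (x l)) => // h3.
  have xl0 : x l = 0 by lra.
  have : 0 < x' l by move: Hne; rewrite xl0 add0r mulN1r oppr_eq0 => Hne; rewrite lt_def Hne.
  move=> h4; have : l \in supp1 x' by rewrite inE Hl.
  by rewrite -E1 inE xl0 ltxx andbF.
- move=> j; rewrite /d => Hne; have := Vx (inr j); have := Vx' (inr j); rewrite /= => h1 h2.
  case: (ltrP 0 (slk x j)) => // h3.
  have xl0 : slk x j = 0 by lra.
  have h4 : 0 < slk x' j by move: Hne; rewrite xl0 sub0r oppr_eq0 => Hne; rewrite lt_def Hne.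
  have : j \in supp2 x' by rewrite inE.
  by rewrite -E2 inE xl0 ltxx.
- by move=> i; rewrite assigned_lin X2 Y2; ring.
- by move=> j; rewrite load_lin /d /slack; ring.
move=> l; have := Hc l; rewrite /c; lra.
Qed.


Lemma obj_ext (theta x x' : Cust * Serv -> R) : (forall l, x l = x' l) -> obj theta x = obj theta x'.
Proof. by move=> H; apply: eq_bigr => l _; rewrite H. Qed.

Lemma exists_opt (theta : Cust * Serv -> R) : (exists x, feas x) -> exists x, primal_optimal L lam mu eps theta x.
Proof.
move=> [x0 F0].
pose sup x := (supp1 x, supp2 x).
have Hseq : forall s : seq ({set Cust * Serv} * {set Serv})%type,
    (exists x, basic x /\ sup x \in s) ->
    exists x, basic x /\ forall z, basic z -> sup z \in s -> obj theta z <= obj theta x.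
  elim=> [|S s IH] [x1 [b1 in1]]; first by rewrite in_nil in in1.
  have uniqS : forall x x', basic x -> basic x' -> sup x = sup x' ->
      obj theta x = obj theta x'.
    move=> x x' bx bx' [E1 E2]; apply: obj_ext; apply: basic_uniq => //.
    by case: bx'.
  case: (classic (exists x, basic x /\ sup x \in s)) => Hs.
    have [x2 [b2 H2]] := IH Hs.
    case: (classic (exists x, basic x /\ sup x = S)) => [[x3 [b3 e3]]|HS].
      case: (lerP (obj theta x2) (obj theta x3)) => Hle.
        exists x3; split => // z bz; rewrite in_cons => /orP[/eqP ez|ez].
          by rewrite (uniqS z x3) // ez e3.
        by apply: le_trans Hle; apply: H2.
      exists x2; split => // z bz; rewrite in_cons => /orP[/eqP ez|ez].
        by rewrite (uniqS z x3) ?ltW // ez e3.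
      exact: H2.
    exists x2; split => // z bz; rewrite in_cons => /orP[/eqP ez|ez].
      by exfalso; apply: HS; exists z.
    exact: H2.
  exists x1; split => // z bz; rewrite in_cons => /orP[/eqP ez|ez].
    move: in1; rewrite in_cons => /orP[/eqP e1|e1].
      by rewrite (uniqS z x1) // ez e1.
    by exfalso; apply: Hs; exists x1.
  by exfalso; apply: Hs; exists z.
have [x1 [b1 _]] := reduce theta F0 (leqnn _).
have [x [bx Hx]] : exists x, basic x /\ forall z, basic z ->
    sup z \in enum {: {set Cust * Serv} * {set Serv}} -> obj theta z <= obj theta x.
  by apply: Hseq; exists x1; rewrite mem_enum.
exists x; split; first by case: bx.
move=> y Fy; have [z [bz Hz]] := reduce theta Fy (leqnn _).
apply: le_trans Hz _; apply: Hx => //; by rewrite mem_enum.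
Qed.


Lemma pos_line l : l \in L -> primal_bfs_nondegenerate L lam mu eps ->
  (exists x, feas x) -> exists y, feas y /\ 0 < y l.
Proof.
move=> Hl ND [x0 F0].
have [z [bz _]] := reduce (fun _ => 0) F0 (leqnn _).
have Fz : feas z by case: bz.
case: (ltrP 0 (z l)) => Hzl; first by exists z.
have Vz := feas_val Fz.
have zl0 : z l = 0 by have := Vz (inl l); rewrite /=; lra.
have Hnd := ND z bz; rewrite /primal_nondegenerate in Hnd.
have lnot : l \notin supp1 z by rewrite inE zl0 ltxx andbF.
pose P1 := l |: supp1 z.
have Hcard : (#|Cust| + #|Serv| < #|P1| + #|supp2 z|)%N.
  by rewrite /P1 cardsU1 lnot -Hnd /supp1 /supp2 add1n addSn.
have [c [d [c0 d0 Hnz Hsi Hsj]]] := @dep R _ _ _ _ Hcard.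
have cP : forall l', c l' != 0 -> l' \in P1.
  by move=> l' H; case: (boolP (l' \in P1)) => // /c0 H0; rewrite H0 eqxx in H.
have cL : forall l', c l' != 0 -> l' \in L.
  move=> l' /cP; rewrite in_setU1 => /orP[/eqP -> // |]; by rewrite inE => /andP[].
have cLz : forall l', l' \notin L -> c l' = 0.
  by move=> l' H; case: (eqVneq (c l') 0) => // /cL H'; rewrite H' in H.
have Hass : forall i, assigned L c i = 0.
  move=> i; rewrite /assigned -[RHS](Hsi i) big_mkcond /=; apply: eq_bigr => j _.
  by case: ifP => // /negbT /cLz ->.
have Hload : forall j, load L c j + d j = 0.
  move=> j; rewrite /load -[RHS](Hsj j) big_mkcond /=; congr (_ + _); apply: eq_bigr => i _.
  by case: ifP => // /negbT /cLz ->.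
have dP : forall j, d j != 0 -> j \in supp2 z.
  by move=> j H; case: (boolP (j \in supp2 z)) => // /d0 H0; rewrite H0 eqxx in H.
have cl0 : c l != 0.
  apply/negP => /eqP cl; case: bz => _ Bz.
  have [Ac Ad] : (forall l', c l' = 0) /\ (forall j, d j = 0).
    apply: Bz => //.
    - move=> l' H; move: (cP l' H); rewrite in_setU1 => /orP[/eqP e|].
        by rewrite e cl eqxx in H.
      by rewrite inE.
    - by move=> j /dP; rewrite inE.
  by case: Hnz => [[l' Hl']|[j Hj]]; [rewrite Ac eqxx in Hl' | rewrite Ad eqxx in Hj].
pose s := (c l)^-1.
pose c' := fun l' => s * c l'. pose d' := fun j => s * d j.
have Hdir : forall v, dir c' d' v < 0 -> 0 < val z v.
  case=> [l'|j] /= H.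
    have Hne : c l' != 0 by apply/negP => /eqP e; move: H; rewrite /c' e mulr0 ltxx.
    move: (cP l' Hne); rewrite in_setU1 => /orP[/eqP e|].
      by move: H; rewrite e /c' /s mulVf // ltr10.
    by rewrite inE => /andP[].
  have Hne : d j != 0 by apply/negP => /eqP e; move: H; rewrite /d' e mulr0 ltxx.
  by move: (dP j Hne); rewrite inE.
have Hf : forall v, dir c' d' v < 0 -> 0 < val z v / - dir c' d' v.
  by move=> v H; rewrite divr_gt0 ?oppr_gt0 // Hdir.
have [t t0 Ht] := @minpos _ _ (fun v => dir c' d' v < 0)
   (fun v => val z v / - dir c' d' v) Hf.
have Hnn := nonneg_move Vz (ltW t0) Ht.
have cLz' : forall l', l' \notin L -> c' l' = 0 by move=> l' H; rewrite /c' cLz ?mulr0.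
have Hass' : forall i, assigned L c' i = 0 by move=> i; rewrite assigned_scale Hass mulr0.
have Hload' : forall j, load L c' j + d' j = 0.
  by move=> j; rewrite load_scale -mulrDr Hload mulr0.
have [Fy Ey] := move_feas Fz cLz' Hass' Hload' Hnn.
exists (fun l' => z l' + t * c' l'); split => //=.
by rewrite zl0 add0r /c' /s mulVf // mulr1.
Qed.

End LPthy.

Lemma x_le_lam (R : realFieldType) (Cust Serv : finType)
  (L : {set Cust * Serv}) (lam : Cust -> R) (mu : Serv -> R) (eps : R) x l :
  primal_feasible L lam mu eps x -> l \in L -> x l <= lam l.1.
Proof.
case: l => i j [H0 H1 H2 H3] Hl /=; rewrite -(H2 i) /assigned (bigD1 j) //=.
have : 0 <= \sum_(k | ((i, k) \in L) && (k != j)) x (i, k).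
  by apply: sumr_ge0 => k /andP[Hk _]; exact: H1.
lra.
Qed.

Unset Implicit Arguments.

Theorem lemma6 (R : realFieldType) (Cust Serv : finType)
  (L : {set Cust * Serv}) (lam : Cust -> R) (mu : Serv -> R) (eps : R)
  (theta : Cust * Serv -> R) :
  (forall i, 0 < lam i) -> (forall j, 0 < mu j) -> 0 < eps ->
  (exists x, primal_feasible L lam mu eps x) ->
  (forall l, l \in L -> 0 <= theta l) ->
  primal_bfs_nondegenerate L lam mu eps ->
  dual_bfs_nondegenerate L theta ->
  forall (l : Cust * Serv) (xtheta : Cust * Serv -> R),
    primal_optimal L lam mu eps theta xtheta ->
    l \in L -> xtheta l = 0 ->
    exists a : R, Delta L lam mu eps theta l a.
Proof.
move=> Hlam Hmu Heps Hfe Hth ND DND l xth Hopt Hl Hx0.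
have [y [Fy Hy]] := pos_line Hl ND Hfe.
pose K := \sum_(l' in L) theta l' * lam l'.1.
have K0 : 0 <= K by apply: sumr_ge0 => l' Hl'; rewrite mulr_ge0 ?Hth ?ltW.
pose a := (K + 1) / y l.
have a0 : 0 <= a by rewrite /a divr_ge0 ?ltW //; lra.
exists a; split => //; split => //; split; first exact: exists_opt.
move=> x [Fx Ox].
have xl0 : 0 <= x l by exact: (feas_val Fx (inl l)).
case: (ltrP 0 (x l)) => // Hxl; have xl : x l = 0 by lra.
have Hxy := Ox y Fy.
have Hux : objective L (A_upd theta l a) x <= K.
  rewrite /objective; apply: ler_sum => l' Hl'; rewrite /A_upd.
  case: eqP => [->|_]; first by rewrite xl mulr0 mulr_ge0 ?Hth ?ltW.
  by rewrite ler_wpM2l ?Hth // (x_le_lam Fx).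
have Hly : a * y l <= objective L (A_upd theta l a) y.
  rewrite /objective (bigD1 l) //= /A_upd eqxx.
  have : 0 <= \sum_(l' in L | l' != l) (if l' == l then a else theta l') * y l'.
    apply: sumr_ge0 => l' /andP[Hl' Hne]; rewrite (negbTE Hne).
    by rewrite mulr_ge0 ?Hth // (feas_val Fy (inl l')).
  lra.
have : a * y l = K + 1 by rewrite /a; field; rewrite gt_eqF.
lra.
Qed.
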